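(* Let $\mathcal{B}$ be a front on $\mathbb{N}$. There is a Borel map $S:2^{\mathcal{B}}\times[\mathbb{N}]^{\omega}\to[\mathbb{N}]^{\omega}$ such that for every infinite $x\subseteq\mathbb{N}$ and every $\mathcal{F}\subseteq\mathcal{B}$, $S(\mathcal{F},x)$ is an infinite subset of $x$ satisfying $[S(\mathcal{F},x)]^{<\omega}\cap\mathcal{B}\subseteq\mathcal{F}$ or $[S(\mathcal{F},x)]^{<\omega}\cap\mathcal{F}=\emptyset$.
   Context: For finite $s$ and $t\subseteq\mathbb{N}$, $s\sqsubseteq t$ means $s=t\cap\{0,\dots,n\}$ for some $n$. A front on $\mathbb{N}$ is a family $\mathcal{B}\subseteq[\mathbb{N}]^{<\omega}$ of pairwise $\sqsubseteq$-incomparable sets such that every infinite $y\subseteq\mathbb{N}$ has an initial segment in $\mathcal{B}$. $[\mathbb{N}]^\omega$ is the space of infinite subsets of $\mathbb{N}$ (as a subspace of $2^{\mathbb{N}}$), and $2^{\mathcal{B}}$ is the Cantor space of subsets of $\mathcal{B}$. *)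

(* Defs.v *)
From mathcomp Require Import all_boot.
Set Implicit Arguments. Unset Strict Implicit. Unset Printing Implicit Defensive.

(* Subsets of nat are represented by their characteristic functions nat -> bool.
   Finite subsets of nat ([N]^{<omega}) are represented canonically by strictly
   increasing lists (sorted ltn). *)

Definition fin_set (s : seq nat) : Prop := sorted ltn s.

Definition infinite_set (x : nat -> bool) : Prop :=
  forall n, exists m, n <= m /\ x m.

Definition init_seg (s t : seq nat) : Prop :=
  exists n, forall k, (k \in s) = (k < n) && (k \in t).

Definition init_seg_of (s : seq nat) (y : nat -> bool) : Prop :=
  exists n, forall k, (k \in s) = (k < n) && y k.

Definition front (B : seq nat -> Prop) : Prop :=
  (forall s, B s -> fin_set s) /\
  (forall s t, B s -> B t -> init_seg s t -> s = t) /\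
  (forall y, infinite_set y -> exists s, B s /\ init_seg_of s y).

(* Borel sets of the product space I -> bool (I countable in our uses):
   the sigma-algebra generated by the subbasic cylinders {f | f i = b}. *)
Inductive borel {I : Type} : ((I -> bool) -> Prop) -> Prop :=
| borel_cyl (i : I) (b : bool) : borel (fun f => f i = b)
| borel_compl (A : (I -> bool) -> Prop) : borel A -> borel (fun f => ~ A f)
| borel_union (A : nat -> (I -> bool) -> Prop) :
    (forall n, borel (A n)) -> borel (fun f => exists n, A n f)
| borel_ext (A C : (I -> bool) -> Prop) :
    borel A -> (forall f, A f <-> C f) -> borel C.

(* A map S : 2^{seq nat} x 2^N -> 2^N is Borel (jointly), identifying the
   product 2^{seq nat} x 2^N with 2^{seq nat + nat}. *)
Definition borel_map2
  (S : (seq nat -> bool) -> (nat -> bool) -> (nat -> bool)) : Prop :=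
  forall A : (nat -> bool) -> Prop, borel A ->
    borel (fun g : (seq nat + nat) -> bool =>
             A (S (fun s => g (inl s)) (fun n => g (inr n)))).

(* Main.v *)
Require Import Defs.
From mathcomp Require Import all_boot.
From Stdlib Require Import Classical ClassicalEpsilon FunctionalExtensionality.
Set Implicit Arguments. Unset Strict Implicit. Unset Printing Implicit Defensive.

Lemma borel_pre {I J : Type} (A : (I -> bool) -> Prop) (hA : borel A)
  (Phi : (J -> bool) -> (I -> bool)) (hP : forall i, borel (fun g => Phi g i = true)) :
  borel (fun g => A (Phi g)).
Proof.
induction hA.
- case: b.
  + exact: hP.
  + apply: (borel_ext (borel_compl (hP i))) => g; case: (Phi g i); split=> //; by move=> H; exfalso; apply: H.
- exact: borel_compl.
- exact: (@borel_union J (fun n g => A n (Phi g)) H0).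
- apply: (borel_ext IHhA) => g; exact: H.
Qed.

Definition Gt := (seq nat + nat) -> bool.
Definition bb (f : Gt -> bool) := borel (fun g => f g = true).
Definition Bs (P : Gt -> Prop) := borel P.

Lemma Bs_full : Bs (fun _ => True).
Proof.
pose A := (fun n => if n is 0 then (fun g : Gt => g (inr 0) = true)
   else (fun g => ~ g (inr 0) = true)).
apply: (@borel_ext _ (fun g => exists n, A n g)); first apply: borel_union.
- by case=> [|n]; [apply: borel_cyl | apply: borel_compl; apply: borel_cyl].
- move=> g; split=> // _; case: (g (inr 0)) / idP => h; [exists 0 | exists 1] => //.
Qed.

Lemma Bs_or P Q : Bs P -> Bs Q -> Bs (fun g => P g \/ Q g).
Proof.
move=> hP hQ.
apply: (@borel_ext _ (fun g => exists n, (if n is 0 then P else Q) g)); first apply: borel_union.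
- by case.
- move=> g; split; first by case=> [[|n]] h; [left|right].
  by case=> h; [exists 0 | exists 1].
Qed.

Lemma Bs_not P : Bs P -> Bs (fun g => ~ P g).
Proof. exact: borel_compl. Qed.

Lemma Bs_and P Q : Bs P -> Bs Q -> Bs (fun g => P g /\ Q g).
Proof.
move=> hP hQ; apply: (borel_ext (Bs_not (Bs_or (Bs_not hP) (Bs_not hQ)))).
move=> g; split; last by move=> [p q] [].
by move=> h; split; apply: NNPP => h'; apply: h; [left|right].
Qed.

Lemma Bs_ex (P : nat -> Gt -> Prop) : (forall n, Bs (P n)) -> Bs (fun g => exists n, P n g).
Proof. exact: borel_union. Qed.

Lemma Bs_all (P : nat -> Gt -> Prop) : (forall n, Bs (P n)) -> Bs (fun g => forall n, P n g).
Proof.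
move=> h; apply: (borel_ext (Bs_not (Bs_ex (fun n => Bs_not (h n))))).
move=> g; split; last by move=> H [n]; apply.
by move=> H n; apply: NNPP => h'; apply: H; exists n.
Qed.

Lemma Bs_ext P Q : Bs P -> (forall g, P g <-> Q g) -> Bs Q.
Proof. exact: borel_ext. Qed.

Lemma bb_const b : bb (fun _ => b).
Proof.
case: b.
- by apply: (Bs_ext Bs_full).
- apply: (Bs_ext (Bs_not Bs_full)) => g; split=> //; by case.
Qed.

Lemma bb_cyl z : bb (fun g => g z).
Proof. exact: borel_cyl. Qed.

Lemma bb_neg f : bb f -> bb (fun g => ~~ f g).
Proof.
move=> h; apply: (Bs_ext (Bs_not h)) => g; case: (f g) => /=; split=> //; by move=> H; exfalso; apply: H.
Qed.

Lemma bb_and f h : bb f -> bb h -> bb (fun g => f g && h g).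
Proof.
move=> hf hh; apply: (Bs_ext (Bs_and hf hh)) => g; case: (f g); case: (h g) => /=; split=> //; by case.
Qed.

Lemma bb_or f h : bb f -> bb h -> bb (fun g => f g || h g).
Proof.
move=> hf hh; apply: (Bs_ext (Bs_or hf hh)) => g; case: (f g); case: (h g) => /=; split=> //;
  by [left | right | case].
Qed.

Lemma bb_if c f h : bb c -> bb f -> bb h -> bb (fun g => if c g then f g else h g).
Proof.
move=> hc hf hh; apply: (Bs_ext (bb_or (bb_and hc hf) (bb_and (bb_neg hc) hh))) => g.
by case: (c g); case: (f g); case: (h g).
Qed.

Lemma bb_eqb f h : bb f -> bb h -> bb (fun g => f g == h g).
Proof.
move=> hf hh; apply: (Bs_ext (bb_or (bb_and hf hh) (bb_and (bb_neg hf) (bb_neg hh)))) => g.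
by case: (f g); case: (h g).
Qed.

Definition asb (P : Prop) : bool := if excluded_middle_informative P then true else false.

Lemma asbP (P : Prop) : asb P = true <-> P.
Proof. rewrite /asb; case: excluded_middle_informative => //. Qed.

Lemma bb_prop P : Bs P -> bb (fun g => asb (P g)).
Proof. move=> h; apply: (Bs_ext h) => g; by rewrite asbP. Qed.

Lemma bb_comp (Phi : Gt -> Gt) h : (forall z, bb (fun g => Phi g z)) -> bb h ->
  bb (fun g => h (Phi g)).
Proof. move=> hP hh; exact: (borel_pre hh hP). Qed.

Lemma sorted_cat_lt s u a b : sorted ltn (s ++ u) -> a \in s -> b \in u -> a < b.
Proof.
rewrite sorted_pairwise; last exact: ltn_trans.
rewrite pairwise_cat => /and3P[/allrelP H _ _]; exact: H.
Qed.

Lemma sorted_cons_lt n u b : sorted ltn (n :: u) -> b \in u -> n < b.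
Proof.
rewrite sorted_pairwise; last exact: ltn_trans.
by rewrite pairwise_cons => /andP[/allP H _]; apply: H.
Qed.

Lemma sorted_catr s u : sorted ltn (s ++ u) -> sorted ltn u.
Proof. by move=> H; case: (cat_sorted2 H). Qed.
Lemma sorted_catl s u : sorted ltn (s ++ u) -> sorted ltn s.
Proof. by move=> H; case: (cat_sorted2 H). Qed.

Lemma LemA B s u : front B -> B s -> sorted ltn (s ++ u) -> B (s ++ u) -> u = [::].
Proof.
move=> [hB1 [hB2 hB3]] Bs; case: u => [//| a u'] Hs Bt.
have : s = s ++ a :: u'.
  apply: hB2 => //; exists a => k; rewrite mem_cat.
  case: (boolP (k \in s)) => ks /=.
  - by rewrite (sorted_cat_lt Hs ks (mem_head _ _)).
  - rewrite in_cons; case: eqP => [-> | _]; first by rewrite ltnn.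
    case: (boolP (k \in u')) => ku; last by rewrite andbF.
    have : a < k.
      by apply: (sorted_cons_lt (sorted_catr Hs)).
    by case: ltngtP.
move/(congr1 size); rewrite size_cat /= => /eqP; rewrite -{1}(addn0 (size s)) eqn_add2l.
by [].
Qed.

Definition Fof (g : Gt) (s : seq nat) := g (inl s).
Definition xof (g : Gt) : nat -> bool := fun n => g (inr n).
Definition PP (B : seq nat -> Prop) s (Y : Gt -> nat -> bool) (C : Gt -> bool) :=
  forall g, infinite_set (xof g) -> infinite_set (Y g) /\ (forall k, Y g k -> xof g k) /\
  forall u, sorted ltn (s ++ u) -> B (s ++ u) -> (forall k, k \in u -> Y g k) ->
    Fof g (s ++ u) = C g.
Definition Good B s := exists Y C, (forall k, bb (fun g => Y g k)) /\ bb C /\ PP B s Y C.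

Lemma Base B s : front B -> (exists b N, B b /\ forall k, (k \in b) = (k < N) && (k \in s)) ->
  Good B s.
Proof.
move=> hB [b [N [Bb Hb]]].
exists (fun g => xof g), (fun g => Fof g s); split; first by move=> k; apply: bb_cyl.
split; first by apply: bb_cyl.
move=> g xinf; split=> //; split=> // u Hs Bt _.
suff -> : u = [::] by rewrite cats0.
case: (boolP (has (fun k => k < N) u)).
- case/hasP=> k0 k0u k0N.
  have bs : b = s.
    apply: (irr_sorted_eq ltn_trans ltnn).
    + exact: hB.1.
    + exact: sorted_catl Hs.
    + move=> k; rewrite Hb; case: (boolP (k \in s)) => ks; last by rewrite andbF.
      by rewrite (ltn_trans (sorted_cat_lt Hs ks k0u) k0N).
  by apply: (LemA (s:=s) hB) => //; rewrite -bs.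
- move/hasPn=> HN.
  have bt : b = s ++ u.
    apply: hB.2.1 => //; exists N => k; rewrite Hb mem_cat.
    case: (boolP (k \in u)) => ku; last by rewrite orbF.
    by rewrite (negbTE (HN k ku)) .
  case: u HN Hs Bt bt => [//| a u'] HN _ _ bt.
  have : a \in b by rewrite bt mem_cat mem_head orbT.
  by rewrite Hb (negbTE (HN a (mem_head _ _))).
Qed.

Definition above (s : seq nat) k := all (fun a => a < k) s.
Definition upd (g : Gt) (x : nat -> bool) : Gt :=
  fun z => match z with inl t => g (inl t) | inr n => x n end.

Fixpoint zz s (Yf : nat -> Gt -> nat -> bool) (n : nat) (g : Gt) : nat -> bool :=
  match n with
  | 0 => fun k => xof g k && above s k
  | n'.+1 => fun k => if k <= n' then zz s Yf n' g k
      else if zz s Yf n' g n' then Yf n' (upd g (fun j => zz s Yf n' g j && (n' < j))) k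
      else zz s Yf n' g k
  end.

Lemma upd_bb (x : Gt -> nat -> bool) : (forall j, bb (fun g => x g j)) ->
  forall z, bb (fun g => upd g (x g) z).
Proof. move=> hx [t|j]; [exact: (bb_cyl (inl t)) | exact: hx]. Qed.

Lemma zz_bb s Yf : (forall n k, bb (fun g => Yf n g k)) -> forall n k, bb (fun g => zz s Yf n g k).
Proof.
move=> HY; elim=> [|n IH] k /=.
- apply: bb_and; [exact: (bb_cyl (inr k)) | exact: bb_const].
- case: (k <= n); first exact: IH.
  apply: bb_if; [exact: IH | | exact: IH].
  apply: (bb_comp (Phi := fun g => upd g (fun j => zz s Yf n g j && (n < j))) (h := fun g => Yf n g k)).
  + apply: upd_bb => j; apply: bb_and; [exact: IH | exact: bb_const].
  + exact: HY.
Qed.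

Lemma mem_sumn s a : a \in s -> a <= sumn s.
Proof.
elim: s => //= b s IH; rewrite in_cons => /orP[/eqP->|/IH h]; first exact: leq_addr.
exact: leq_trans h (leq_addl _ _).
Qed.

Section Props.
Definition HYp B s (Yf : nat -> Gt -> nat -> bool) (Cf : nat -> Gt -> bool) :=
  forall n, above s n -> PP B (rcons s n) (Yf n) (Cf n).

Lemma zz_inv B s Yf Cf g : HYp B s Yf Cf -> infinite_set (xof g) ->
  forall n, infinite_set (zz s Yf n g) /\ (forall k, zz s Yf n g k -> zz s Yf 0 g k).
Proof.
move=> HY xinf; elim=> [|n [infZ subZ]].
- split=> // N.
  have [m [Nm xm]] := xinf (N + (sumn s).+1).
  exists m; split; first by apply: leq_trans Nm; apply: leq_addr.
  rewrite /= xm /above /=; apply/allP => a ains.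
  apply: leq_trans Nm; apply: leq_trans (leq_addl N _); rewrite ltnS; exact: mem_sumn ains.
- case hn: (zz s Yf n g n).
  + have abv : above s n by have := subZ n hn; rewrite /= => /andP[].
    have inpinf : infinite_set (fun j => zz s Yf n g j && (n < j)).
      move=> N; have [m [Nm zm]] := infZ (maxn N n.+1).
      exists m; rewrite geq_max in Nm; case/andP: Nm => -> ->; by rewrite zm.
    have [Yinf [Ysub _]] := HY n abv (upd g (fun j => zz s Yf n g j && (n < j))) inpinf.
    split.
    * move=> N; have [m [Nm ym]] := Yinf (maxn N n.+1).
      rewrite geq_max in Nm; case/andP: Nm => Nm nm.
      by exists m; rewrite Nm /= leqNgt nm /= hn.
    * move=> k /=; case: ifP => _; first exact: subZ.
      rewrite hn => /Ysub /= /andP[h _]; exact: subZ.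
  + split.
    * move=> N; have [m [Nm zm]] := infZ N; exists m; rewrite Nm /=.
      by rewrite hn; case: ifP.
    * by move=> k /=; rewrite hn; case: ifP => _ /subZ.
Qed.

Lemma zz_stable s Yf g k d : zz s Yf (k + d) g k = zz s Yf k g k.
Proof. elim: d => [|d IH]; first by rewrite addn0. by rewrite addnS /= leq_addr. Qed.

Lemma zz_sub B s Yf Cf g : HYp B s Yf Cf -> infinite_set (xof g) ->
  forall n k, zz s Yf n.+1 g k -> zz s Yf n g k.
Proof.
move=> HY xinf n k.
have [infZ subZ] := zz_inv HY xinf n.
rewrite /=; case: ifP => // _; case hn: (zz s Yf n g n) => //.
have abv : above s n by have := subZ n hn; rewrite /= => /andP[].
have inpinf : infinite_set (fun j => zz s Yf n g j && (n < j)).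
  move=> N; have [m [Nm zm]] := infZ (maxn N n.+1).
  exists m; rewrite geq_max in Nm; case/andP: Nm => -> ->; by rewrite zm.
have [_ [Ysub _]] := HY n abv (upd g (fun j => zz s Yf n g j && (n < j))) inpinf.
by move/Ysub => /= /andP[].
Qed.

Lemma zz_mono B s Yf Cf g : HYp B s Yf Cf -> infinite_set (xof g) ->
  forall i d k, zz s Yf (i + d) g k -> zz s Yf i g k.
Proof.
move=> HY xinf i; elim=> [|d IH] k; first by rewrite addn0.
by rewrite addnS => /(zz_sub HY xinf) /IH.
Qed.

Lemma zz_const s Yf g N d : (forall i, N <= i < N + d -> zz s Yf i g i = false) ->
  forall m, zz s Yf (N + d) g m = zz s Yf N g m.
Proof.
elim: d => [|d IH] H m; first by rewrite addn0.
rewrite addnS /= H; last by rewrite leq_addr /= addnS ltnS.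
have -> : zz s Yf (N + d) g m = zz s Yf N g m.
  apply: IH => i /andP[h1 h2]; apply: H; rewrite h1 /=; apply: leq_trans h2 _.
  by rewrite addnS.
by case: ifP.
Qed.

Lemma DD_inf B s Yf Cf g : HYp B s Yf Cf -> infinite_set (xof g) ->
  infinite_set (fun k => zz s Yf k g k).
Proof.
move=> HY xinf N.
have [infZ _] := zz_inv HY xinf N.
have [k [Nk zk]] := infZ N.
case: (boolP (has (fun i => zz s Yf i g i) (iota N (k - N)))).
- case/hasP=> i; rewrite mem_iota => /andP[Ni _] zi; by exists i.
- move/hasPn=> H; exists k; split=> //.
  rewrite -(subnKC Nk) zz_const ?subnKC //.
  move=> i hi; apply/negbTE/H; rewrite mem_iota subnKC //. 
Qed.

End Props.

Lemma inp_inf s Yf g n : infinite_set (zz s Yf n g) ->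
  infinite_set (fun j => zz s Yf n g j && (n < j)).
Proof.
move=> infZ N; have [m [Nm zm]] := infZ (maxn N n.+1).
exists m; rewrite geq_max in Nm; case/andP: Nm => -> ->; by rewrite zm.
Qed.

Lemma Step B s : ~ B s -> (forall n, above s n -> Good B (rcons s n)) -> Good B s.
Proof.
move=> nBs HG.
have H' : forall n, exists p : (Gt -> nat -> bool) * (Gt -> bool),
    (forall k, bb (fun g => p.1 g k)) /\ bb p.2 /\ (above s n -> PP B (rcons s n) p.1 p.2).
  move=> n; case: (boolP (above s n)) => a.
  - have [Y [C [h1 [h2 h3]]]] := HG n a; by exists (Y, C).
  - exists ((fun _ _ => false), (fun _ => false)); split; first by move=> k; exact: bb_const.
    split; first exact: bb_const.
    by move=> h; case/negP: a.
pose pf n := proj1_sig (constructive_indefinite_description _ (H' n)).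
have pfP n := proj2_sig (constructive_indefinite_description _ (H' n)).
pose Yf n := (pf n).1. pose Cf n := (pf n).2.
have HYb : forall n k, bb (fun g => Yf n g k) by move=> n; exact: (pfP n).1.
have HCb : forall n, bb (Cf n) by move=> n; exact: (pfP n).2.1.
have HY : HYp B s Yf Cf by move=> n; exact: (pfP n).2.2.
pose DD g k := zz s Yf k g k.
pose cc n g := Cf n (upd g (fun j => zz s Yf n g j && (n < j))).
pose cs g := asb (forall N, exists n, N <= n /\ DD g n /\ cc n g).
have DDb : forall k, bb (fun g => DD g k) by move=> k; exact: zz_bb.
have ccb : forall n, bb (cc n).
  move=> n; apply: (bb_comp (Phi := fun g => upd g (fun j => zz s Yf n g j && (n < j))) (h := Cf n)).
  + apply: upd_bb => j; apply: bb_and; [exact: zz_bb | exact: bb_const].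
  + exact: HCb.
have csb : bb cs.
  apply: bb_prop; apply: Bs_all => N; apply: Bs_ex => n.
  apply: Bs_and; first exact: (bb_const (N <= n)).
  by apply: Bs_and; [exact: DDb | exact: ccb].
exists (fun g k => DD g k && (cc k g == cs g)), cs.
split; first by move=> k; apply: bb_and; [exact: DDb | apply: bb_eqb; [exact: ccb | exact: csb]].
split; first exact: csb.
move=> g xinf; split; [|split].
- case: (excluded_middle_informative (forall N, exists n, N <= n /\ DD g n /\ cc n g)) => [P|nP].
  + have -> : cs g = true by apply/asbP.
    move=> N; have [n [Nn [Dn cn]]] := P N; exists n; by rewrite Nn Dn cn.
  + have -> : cs g = false by apply/negbTE/negP => /asbP.
    have [N0 HN0] := not_all_ex_not _ _ nP.
    have hc : forall n, N0 <= n -> DD g n -> cc n g = false.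
      move=> n h1 h2; apply/negbTE/negP => h3; apply: HN0; by exists n.
    move=> N; have [n [Nn Dn]] := DD_inf HY xinf (maxn N N0).
    rewrite geq_max in Nn; case/andP: Nn => Nn N0n.
    by exists n; rewrite Nn /DD Dn (hc n N0n Dn).
- move=> k /andP[Dk _]; have := (zz_inv HY xinf k).2 k Dk; by rewrite /= => /andP[].
- case=> [|n u'] Hs Bt Hu; first by rewrite cats0 in Bt.
  have /andP[Dn /eqP ccn] := Hu n (mem_head _ _).
  rewrite -ccn.
  have [infZ subZ] := zz_inv HY xinf n.
  have abv : above s n by have := subZ n Dn; rewrite /= => /andP[].
  have [_ [_ Hh]] := HY n abv (upd g (fun j => zz s Yf n g j && (n < j))) (inp_inf infZ).
  rewrite -cat_rcons; apply: Hh; rewrite ?cat_rcons //.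
  move=> k ku; have /andP[Dk _] := Hu k (mem_behead (s:=n :: u') ku).
  have nk : n < k by apply: (sorted_cons_lt (sorted_catr Hs)).
  have : zz s Yf n.+1 g k.
    apply: (zz_mono HY xinf (d := k - n.+1)); by rewrite subnKC.
  have Dn' : zz s Yf n g n = true := Dn.
  by rewrite /= leqNgt nk /= Dn'.
Qed.

Fixpoint chain (s0 : seq nat) (nx : seq nat -> nat) (i : nat) : seq nat :=
  if i is i'.+1 then rcons (chain s0 nx i') (nx (chain s0 nx i')) else s0.

Lemma sorted_rcons_above s n : sorted ltn s -> above s n -> sorted ltn (rcons s n).
Proof.
rewrite !sorted_pairwise; try exact: ltn_trans.
by move=> Hs Ha; rewrite pairwise_rcons Hs andbT; exact: Ha.
Qed.

Lemma AllGood B : front B -> forall s, sorted ltn s -> Good B s.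
Proof.
move=> hB s0 Hs0; apply: NNPP => nG0.
have step : forall s, sorted ltn s -> ~ Good B s ->
    exists n, above s n /\ ~ Good B (rcons s n).
  move=> s Hs nG; apply: NNPP => H; apply: (nG); apply: Step.
  - move=> Bs; apply: nG; apply: Base => //; exists s, (sumn s).+1; split=> // k.
    case: (boolP (k \in s)) => ks; last by rewrite andbF.
    by rewrite ltnS mem_sumn.
  - move=> n a; apply: NNPP => nG'; apply: H; by exists n.
pose nx s := match excluded_middle_informative
    (exists n, above s n /\ ~ Good B (rcons s n)) with
  | left h => proj1_sig (constructive_indefinite_description _ h) | right _ => 0 end.
have nxP : forall s, sorted ltn s -> ~ Good B s ->
    above s (nx s) /\ ~ Good B (rcons s (nx s)).
  move=> s Hs nG; rewrite /nx; case: excluded_middle_informative => [h|h].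
  - exact: (proj2_sig (constructive_indefinite_description _ h)).
  - by exfalso; apply: h; apply: step.
pose c := chain s0 nx.
have cP : forall i, sorted ltn (c i) /\ ~ Good B (c i).
  elim=> [|i [Hi Gi]] //=.
  have [a g] := nxP _ Hi Gi; split => //; exact: sorted_rcons_above.
pose nxt i := nx (c i).
have f1 : forall i d k, k \in c i -> k \in c (i + d).
  move=> i; elim=> [|d IH] k; first by rewrite addn0.
  by rewrite addnS /= mem_rcons in_cons => /IH ->; rewrite orbT.
have nxt_in : forall i, nxt i \in c i.+1 by move=> i; rewrite /= mem_rcons mem_head.
have abv : forall i k, k \in c i -> k < nxt i.
  by move=> i k; have := (nxP _ (cP i).1 (cP i).2).1 => /allP H /H.
have f2 : forall i, nxt i < nxt i.+1 by move=> i; apply: abv.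
have f2' : forall i d, nxt i <= nxt (i + d).
  move=> i; elim=> [|d IH]; first by rewrite addn0.
  by rewrite addnS; apply: leq_trans IH (ltnW (f2 _)).
have f2'' : forall i, i <= nxt i.
  elim=> // i IH; exact: leq_ltn_trans IH (f2 i).
have f3 : forall i d k, k \in c (i + d) -> (k \in c i) \/ nxt i <= k.
  move=> i; elim=> [|d IH] k; first by rewrite addn0; left.
  rewrite addnS /= mem_rcons in_cons => /orP[/eqP -> | /IH //].
  by right; apply: f2'.
pose y k := k \in c k.+1.
have yinf : infinite_set y.
  move=> N; exists (nxt N); split; first exact: f2''.
  rewrite /y -(subnKC (f2'' N : N < (nxt N).+1)); apply: f1; exact: nxt_in.
have [b [Bb [N HN]]] := hB.2.2 y yinf.
apply: (cP N).2; apply: Base => //; exists b, N; split=> // k.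
rewrite HN; case: (ltnP k N) => //= kN; rewrite /y.
apply/idP/idP.
- by move=> h; rewrite -(subnKC kN); apply: f1.
- rewrite -(subnKC kN) => /f3 [//|].
  by move=> h; have := leq_trans (f2'' k.+1) h; rewrite ltnn.
Qed.

Definition enc (F : seq nat -> bool) (x : nat -> bool) : Gt :=
  fun z => match z with inl t => F t | inr n => x n end.

Theorem mainTheorem7 (B : seq nat -> Prop) (hB : front B) :
  exists S : (seq nat -> bool) -> (nat -> bool) -> (nat -> bool),
    borel_map2 S /\
    forall (x : nat -> bool) (F : seq nat -> bool),
      infinite_set x -> (forall s, F s -> B s) ->
      infinite_set (S F x) /\
      (forall k, S F x k -> x k) /\
      ((forall s, B s -> (forall k, k \in s -> S F x k) -> F s) \/
       (forall s, F s -> ~ (forall k, k \in s -> S F x k))).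
Proof.
have [Y [C [HYb [HCb HP]]]] := AllGood hB (s := [::]) erefl.
exists (fun F x => Y (enc F x)); split.
- move=> A hA.
  have E : forall g : Gt, enc (fun s => g (inl s)) (fun n => g (inr n)) = g.
    by move=> g; apply: functional_extensionality; case.
  apply: (borel_pre hA (Phi := fun g => Y (enc (fun s => g (inl s)) (fun n => g (inr n))))).
  move=> i; apply: (Bs_ext (HYb i)) => g; by rewrite E.
- move=> x F xinf FB.
  have [Yinf [Ysub Hh]] := HP (enc F x) xinf.
  split; first exact: Yinf.
  split; first exact: Ysub.
  case hC: (C (enc F x)); [left|right].
  + move=> s Bs Hs; have := Hh s (hB.1 s Bs) Bs Hs; by rewrite hC.
  + move=> s Fs Hs; have := Hh s (hB.1 s (FB s Fs)) (FB s Fs) Hs.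
    by rewrite hC /Fof /= Fs.
Qed.
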